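(* Let $u:(a,b)\to(0,\infty)$ be a maximally extended solution of $\frac{u''}{1+(u')^2}=\frac{xu'}{2}-\frac u2+\frac{n-1}{u}$. If $b<\infty$ then $\lim_{x\to b}u(x)<\infty$; if $a>-\infty$ then $\lim_{x\to a}u(x)<\infty$.
   Context: $n\ge2$ is a fixed integer. ''Maximally extended'' means the solution cannot be extended as a positive $C^2$ solution to a larger interval. *)

(* Defs.v *)
From Stdlib Require Import Reals.
From Coquelicot Require Import Coquelicot.
Open Scope R_scope.

Definition in_ival (a b : Rbar) (x : R) : Prop := Rbar_lt a x /\ Rbar_lt x b.

Definition pos_C2_solution (n : nat) (a b : Rbar) (u : R -> R) : Prop :=
  Rbar_lt a b /\
  forall x : R, in_ival a b x ->
    0 < u x /\
    ex_derive u x /\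
    ex_derive (Derive u) x /\
    continuous (Derive (Derive u)) x /\
    Derive (Derive u) x / (1 + (Derive u x) ^ 2)
      = x * Derive u x / 2 - u x / 2 + (INR n - 1) / u x.

Definition maximal_solution (n : nat) (a b : Rbar) (u : R -> R) : Prop :=
  pos_C2_solution n a b u /\
  ~ (exists (a' b' : Rbar) (v : R -> R),
        Rbar_le a' a /\ Rbar_le b b' /\ (a' <> a \/ b' <> b) /\
        pos_C2_solution n a' b' v /\
        (forall x, in_ival a b x -> v x = u x)).

(* Main.v *)
Require Import Defs.
From Stdlib Require Import Reals Lra Psatz Classical.
From Coquelicot Require Import Coquelicot.
Open Scope R_scope.
Lemma is_derive_eq (f : R -> R) x l l' : is_derive f x l -> l = l' -> is_derive f x l'.
Proof. intros H ->; exact H. Qed.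

Lemma dW (u p q : R -> R) x : is_derive u x (p x) -> is_derive p x (q x) ->
  is_derive (fun y => y * p y - u y) x (x * q x).
Proof.
  intros Hu Hp. eapply is_derive_eq.
  apply (is_derive_minus (fun y => y * p y) u).
  apply (is_derive_mult (fun y => y) p). apply is_derive_id. exact Hp.
  intros; apply Rmult_comm. exact Hu.
  unfold minus, plus, opp, mult, one; simpl. unfold plus; simpl. ring.
Qed.

Lemma dPhi (w dw u p : R -> R) c x : is_derive w x (dw x) -> is_derive u x (p x) -> w x <> 0 ->
  is_derive (fun y => / w y + c * u y) x (- dw x / w x ^ 2 + c * p x).
Proof.
  intros Hw Hu Hn. eapply is_derive_eq.
  apply (is_derive_plus (fun y => / w y) (fun y => c * u y)).
  apply is_derive_inv. exact Hw. exact Hn. apply is_derive_scal. exact Hu.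
  unfold plus; simpl. reflexivity.
Qed.

Lemma dR (u p : R -> R) x : is_derive u x (p x) -> x <> 0 ->
  is_derive (fun y => u y * / y) x ((x * p x - u x) / x ^ 2).
Proof.
  intros Hu Hn. eapply is_derive_eq.
  apply (is_derive_mult u (fun y => / y)). exact Hu.
  apply (is_derive_inv (fun y => y)). apply is_derive_id. exact Hn.
  intros; apply Rmult_comm.
  unfold plus, mult, one; simpl. field. exact Hn.
Qed.

Lemma dG (u p : R -> R) P x : is_derive u x (p x) ->
  is_derive (fun y => u y - P * y) x (p x - P).
Proof.
  intros Hu. eapply is_derive_eq.
  apply (is_derive_minus u (fun y => P * y)). exact Hu.
  apply is_derive_scal. apply is_derive_id.
  unfold minus, plus, opp, one; simpl. ring.
Qed.

Lemma dN (u p : R -> R) x : is_derive u x (p x) ->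
  is_derive (fun y => - u y) x (- p x).
Proof.
  intros Hu. eapply is_derive_eq. apply (is_derive_opp u). exact Hu. reflexivity.
Qed.
Lemma cont_of_derive (f : R -> R) x l : is_derive f x l -> continuity_pt f x.
Proof.
  intro H. apply derivable_continuous_pt. exists l. apply is_derive_Reals. exact H.
Qed.

Lemma cont_eps (f : R -> R) x : continuity_pt f x ->
  forall eps, 0 < eps -> exists d, 0 < d /\ forall t, Rabs (t - x) < d -> Rabs (f t - f x) < eps.
Proof.
  intros Hc eps He. destruct (Hc eps He) as [d [Hd Hf]].
  exists d. split; [exact Hd|]. intros t Ht.
  destruct (Req_dec t x) as [->|Hne].
  - rewrite Rminus_diag, Rabs_R0. exact He.
  - apply (Hf t). split. split; [exact I| auto]. exact Ht.
Qed.

Lemma barrier (w dw : R -> R) (al be x2 : R) :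
  al < x2 -> x2 < be ->
  (forall x, al < x < be -> is_derive w x (dw x)) ->
  (forall x, x2 <= x < be -> w x = 0 -> 0 < dw x) ->
  0 < w x2 -> forall y, x2 <= y < be -> 0 < w y.
Proof.
  intros Hax Hxb Hd Hz Hw2 y Hy.
  apply Rnot_le_lt. intro Hwy.
  assert (Hxy : x2 < y).
  { destruct (Rle_lt_or_eq_dec _ _ (proj1 Hy)) as [h|h]; [exact h| subst; lra]. }
  set (S := fun t => x2 <= t <= y /\ forall s, x2 <= s <= t -> 0 < w s).
  assert (HS : bound S) by (exists y; intros t [Ht _]; lra).
  assert (HS2' : S x2).
  { split; [lra|]. intros s Hs. replace s with x2 by lra. exact Hw2. }
  assert (HS2 : exists t, S t) by (exists x2; exact HS2').
  destruct (completeness S HS HS2) as [z [Hub Hlub]].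
  assert (Hz1 : x2 <= z) by (apply Hub; exact HS2').
  assert (Hz2 : z <= y) by (apply Hlub; intros t [Ht _]; lra).
  assert (Hpos : forall s, x2 <= s < z -> 0 < w s).
  { intros s Hs. apply NNPP. intro Hn.
    assert (is_upper_bound S s).
    { intros t [Ht Hts]. apply Rnot_lt_le. intro Hlt. apply Hn. apply Hts. lra. }
    specialize (Hlub _ H). lra. }
  assert (Hcz : continuity_pt w z) by (apply (cont_of_derive _ _ (dw z)); apply Hd; lra).
  assert (Hwz : w z = 0).
  { destruct (Rtotal_order (w z) 0) as [Hl|[He|Hg]]; [|exact He|].
    -
      assert (Hzx : x2 < z).
      { destruct (Rle_lt_or_eq_dec _ _ Hz1) as [h|h]; [exact h|subst; lra]. }
      destruct (cont_eps _ _ Hcz (- w z) ltac:(lra)) as [d [Hd0 Hdd]].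
      set (s := Rmax x2 (z - d/2)).
      assert (Hs1 : x2 <= s) by apply Rmax_l.
      assert (Hs2 : s < z) by (unfold s; apply Rmax_lub_lt; lra).
      assert (Hs3 : z - d/2 <= s) by apply Rmax_r.
      specialize (Hpos s (conj Hs1 Hs2)).
      assert (Rabs (s - z) < d) by (rewrite Rabs_left by lra; lra).
      specialize (Hdd s H). apply Rabs_def2 in Hdd. lra.
    -
      destruct (cont_eps _ _ Hcz (w z) ltac:(lra)) as [d [Hd0 Hdd]].
      assert (Hzy : z < y).
      { destruct (Rle_lt_or_eq_dec _ _ Hz2) as [h|h]; [exact h|subst; lra]. }
      set (t := Rmin y (z + d/2)).
      assert (Ht1 : t <= y) by apply Rmin_l.
      assert (Ht2 : z < t) by (unfold t; apply Rmin_glb_lt; lra).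
      assert (Ht3 : t <= z + d/2) by apply Rmin_r.
      assert (S t).
      { split; [lra|]. intros s Hs.
        destruct (Rlt_or_le s z) as [h|h].
        - apply Hpos; lra.
        - assert (Rabs (s - z) < d) by (rewrite Rabs_right by lra; lra).
          specialize (Hdd s H). apply Rabs_def2 in Hdd. lra. }
      specialize (Hub _ H). lra. }
  assert (Hzx : x2 < z).
  { destruct (Rle_lt_or_eq_dec _ _ Hz1) as [h|h]; [exact h|subst; lra]. }
  assert (Hdz : 0 < dw z) by (apply Hz; [lra|exact Hwz]).
  assert (Hdl : derivable_pt_lim w z (dw z)) by (apply is_derive_Reals; apply Hd; lra).
  destruct (Hdl (dw z) Hdz) as [d Hdd].
  set (h := - Rmin (d/2) ((z - x2)/2)).
  assert (Hh1 : h < 0) by (unfold h; assert (0 < Rmin (d/2) ((z-x2)/2)) by (apply Rmin_pos; destruct d; simpl; lra); lra).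
  assert (Hh2 : - (d/2) <= h) by (unfold h; pose proof (Rmin_l (d/2) ((z-x2)/2)); lra).
  assert (Hh3 : - ((z - x2)/2) <= h) by (unfold h; pose proof (Rmin_r (d/2) ((z-x2)/2)); lra).
  assert (Hhd : Rabs h < d) by (rewrite Rabs_left by lra; destruct d; simpl in *; lra).
  specialize (Hdd h (Rlt_not_eq _ _ Hh1) Hhd).
  assert (Hp : 0 < w (z + h)) by (apply Hpos; lra).
  rewrite Hwz, Rminus_0_r in Hdd.
  assert (w (z + h) / h < 0).
  { unfold Rdiv. apply Rmult_pos_neg; [exact Hp|]. apply Rinv_lt_0_compat; exact Hh1. }
  apply Rabs_def2 in Hdd. lra.
Qed.
Lemma decr_lemma (g dg : R -> R) (al ga be : R) :
  al < ga ->
  (forall x, al < x < be -> is_derive g x (dg x)) ->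
  (forall x, ga <= x < be -> dg x <= 0) ->
  forall x y, ga <= x -> x <= y -> y < be -> g y <= g x.
Proof.
  intros Hag Hd Hn x y Hx Hxy Hy.
  destruct (Rle_lt_or_eq_dec _ _ Hxy) as [Hlt|Heq]; [|subst; lra].
  destruct (MVT_gen g x y dg) as [c [Hc He]].
  - intros z Hz. apply Hd. rewrite Rmin_left in Hz by lra. rewrite Rmax_right in Hz by lra. lra.
  - intros z Hz. rewrite Rmin_left in Hz by lra. rewrite Rmax_right in Hz by lra.
    apply (cont_of_derive _ _ (dg z)). apply Hd. lra.
  - rewrite Rmin_left in Hc by lra. rewrite Rmax_right in Hc by lra.
    assert (dg c <= 0) by (apply Hn; lra).
    assert (dg c * (y - x) <= 0) by (apply Rmult_le_0_r; lra). lra.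
Qed.
Lemma ball_R (y z : R) (e : R) : ball y e z <-> Rabs (z - y) < e.
Proof. reflexivity. Qed.

Lemma mono_lim (u : R -> R) (P m x1 b : R) :
  x1 < b ->
  (forall x y, x1 <= x -> x <= y -> y < b -> u y - P * y <= u x - P * x) ->
  (forall x, x1 <= x < b -> m <= u x - P * x) ->
  exists L, filterlim u (at_left b) (locally L).
Proof.
  intros Hb Hmon Hbd.
  set (E := fun r => exists x, x1 <= x < b /\ r = - (u x - P * x)).
  assert (HE : bound E).
  { exists (- m). intros r [x [Hx ->]]. specialize (Hbd x Hx). lra. }
  assert (HE2 : exists r, E r).
  { exists (- (u x1 - P * x1)). exists x1. split; [lra|reflexivity]. }
  destruct (completeness E HE HE2) as [l [Hub Hlub]].
  exists (- l + P * b).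
  apply filterlim_locally. intros eps.
  assert (Hs : exists xs, x1 <= xs < b /\ u xs - P * xs < - l + eps / 2).
  { apply NNPP. intro Hn.
    assert (is_upper_bound E (l - eps/2)).
    { intros r [x [Hx ->]]. destruct (Rle_or_lt (- (u x - P * x)) (l - eps/2)) as [h|h]; [exact h|].
      exfalso. apply Hn. exists x. split; [exact Hx|lra]. }
    specialize (Hlub _ H). destruct eps as [e he]; simpl in *. lra. }
  destruct Hs as [xs [Hxs Hus]].
  set (d := Rmin (b - xs) (eps / (2 * (Rabs P + 1)))).
  assert (Hd : 0 < d).
  { unfold d. apply Rmin_pos. lra. destruct eps as [e he]; simpl.
    apply Rdiv_lt_0_compat; [lra|]. pose proof (Rabs_pos P). lra. }
  exists (mkposreal d Hd). intros y Hy Hyb. simpl in Hy.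
  apply ball_R. apply ball_R in Hy.
  assert (Hd1 : d <= b - xs) by apply Rmin_l.
  assert (Hd2 : d <= eps / (2 * (Rabs P + 1))) by apply Rmin_r.
  apply Rabs_def2 in Hy. destruct Hy as [Hy1 Hy2].
  change (y - b < d) in Hy1. change (- d < y - b) in Hy2. assert (Hyx : xs <= y) by lra.
  assert (Hg1 : u y - P * y <= u xs - P * xs) by (apply Hmon; lra).
  assert (Hg2 : - (u y - P * y) <= l) by (apply Hub; exists y; split; [lra|reflexivity]).
  assert (HP : Rabs (P * (y - b)) <= eps / 2).
  { rewrite Rabs_mult. 
    assert (Rabs (y - b) <= eps / (2 * (Rabs P + 1))) by (rewrite Rabs_left1 by lra; lra).
    destruct eps as [e he]; simpl in *.
    pose proof (Rabs_pos P).
    apply Rle_trans with (Rabs P * (e / (2 * (Rabs P + 1)))).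
    apply Rmult_le_compat_l; lra.
    apply Rle_trans with ((Rabs P + 1) * (e / (2 * (Rabs P + 1)))).
    apply Rmult_le_compat_r. apply Rlt_le, Rdiv_lt_0_compat; lra. lra.
    right. field. lra. }
  apply Rabs_le_between in HP.
  apply Rabs_def1; destruct eps as [e he]; simpl in *; lra.
Qed.
Lemma dH (u p q : R -> R) (k x : R) : 0 < u x -> is_derive u x (p x) -> is_derive p x (q x) ->
  q x / (1 + p x ^ 2) = x * p x / 2 - u x / 2 + k / u x ->
  is_derive (fun y => /2 * ln (1 + p y ^ 2) - k * ln (u y) + /4 * u y ^ 2) x (x * p x ^ 2 / 2).
Proof.
  intros Hu Hdu Hdp Heq.
  assert (H1 : is_derive (fun y => 1 + p y ^ 2) x (2 * q x * p x)).
  { eapply is_derive_eq. apply (is_derive_plus (fun _ => 1) (fun y => p y ^ 2)).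
    apply is_derive_const. apply is_derive_pow. exact Hdp.
    simpl. unfold plus, zero; simpl. ring. }
  assert (H2 : is_derive (fun y => ln (1 + p y ^ 2)) x (2 * q x * p x / (1 + p x ^ 2))).
  { eapply is_derive_eq. apply (is_derive_comp ln (fun y => 1 + p y ^ 2)).
    apply is_derive_ln. nra. exact H1. unfold scal; simpl; unfold mult; simpl. field. nra. }
  assert (H3 : is_derive (fun y => ln (u y)) x (p x / u x)).
  { eapply is_derive_eq. apply (is_derive_comp ln u).
    apply is_derive_ln. exact Hu. exact Hdu. unfold scal; simpl; unfold mult; simpl. field. lra. }
  assert (H4 : is_derive (fun y => u y ^ 2) x (2 * p x * u x)).
  { eapply is_derive_eq. apply is_derive_pow. exact Hdu. simpl. ring. }
  eapply is_derive_eq.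
  apply (is_derive_plus (fun y => /2 * ln (1 + p y ^ 2) - k * ln (u y)) (fun y => /4 * u y ^ 2)).
  apply (is_derive_minus (fun y => /2 * ln (1 + p y ^ 2)) (fun y => k * ln (u y))).
  apply is_derive_scal. exact H2. apply is_derive_scal. exact H3.
  apply is_derive_scal. exact H4.
  unfold minus, plus, opp; simpl. unfold plus; simpl.
  assert (E : q x = (1 + p x ^ 2) * (x * p x / 2 - u x / 2 + k / u x)).
  { rewrite <- Heq. field. nra. }
  rewrite E. field. split; [lra|nra].
Qed.
Lemma ln_lt_self x : 0 < x -> ln x < x.
Proof.
  intro Hx. rewrite <- (ln_exp x) at 2. apply ln_increasing; [exact Hx|].
  pose proof (exp_ineq1 x ltac:(lra)). lra.
Qed.

Lemma exp_le_mono a b : a <= b -> exp a <= exp b.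
Proof. intro H. destruct (Rle_lt_or_eq_dec _ _ H) as [h|h]; [left; apply exp_increasing; exact h| subst; lra]. Qed.

Lemma core (k x0 b : R) (u p q : R -> R) : 0 < k -> x0 < b ->
  (forall x, x0 < x < b -> 0 < u x /\ is_derive u x (p x) /\ is_derive p x (q x) /\
     q x / (1 + p x ^ 2) = x * p x / 2 - u x / 2 + k / u x) ->
  exists L, filterlim u (at_left b) (locally L).
Proof.
  intros Hk Hxb Hs.
  destruct (Rle_or_lt b 0) as [Hb|Hb].
  - set (x1 := (x0 + b) / 2).
    set (H := fun y => /2 * ln (1 + p y ^ 2) - k * ln (u y) + /4 * u y ^ 2).
    assert (HH : forall y, x1 <= y < b -> H y <= H x1).
    { intros y Hy. apply (decr_lemma H (fun y => y * p y ^ 2 / 2) x0 x1 b); try (unfold x1 in *; lra).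
      - intros z Hz. destruct (Hs z Hz) as [A [B [C D]]]. apply (dH u p q k z); assumption.
      - intros z Hz. assert (0 <= p z ^ 2) by nra. nra. }
    set (P := exp (2 * (H x1 + k ^ 2))).
    assert (HP : 0 < P) by apply exp_pos.
    assert (Hp : forall y, x1 <= y < b -> p y <= P).
    { intros y Hy. specialize (HH y Hy). destruct (Hs y ltac:(unfold x1 in *; lra)) as [A _].
      assert (HH' : /2 * ln (1 + p y ^ 2) - k * ln (u y) + /4 * u y ^ 2 <= H x1) by exact HH.
      pose proof (ln_lt_self _ A) as Hl.
      assert (Hln : ln (1 + p y ^ 2) <= 2 * (H x1 + k ^ 2)).
      { assert (k * ln (u y) <= k * u y) by (apply Rmult_le_compat_l; lra).
        assert (k * u y - /4 * u y ^ 2 <= k ^ 2) by (pose proof (pow2_ge_0 (u y - 2*k)); nra).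
        lra. }
      apply exp_le_mono in Hln. rewrite exp_ln in Hln by nra. fold P in Hln. nra. }
    apply (mono_lim u P (- P * b) x1 b); [unfold x1; lra| |].
    + intros y y' Hy Hyy Hy'. apply (decr_lemma (fun y => u y - P * y) (fun y => p y - P) x0 x1 b); try (unfold x1 in *; lra).
      * intros z Hz. destruct (Hs z Hz) as [A [B _]]. apply dG. exact B.
      * intros z Hz. specialize (Hp z Hz). lra.
    + intros y Hy. destruct (Hs y ltac:(unfold x1 in *; lra)) as [A _]. nra.
  - set (x1 := Rmax ((x0 + b) / 2) (b / 2)).
    assert (Hx1a : (x0 + b) / 2 <= x1) by apply Rmax_l.
    assert (Hx1b : b / 2 <= x1) by apply Rmax_r.
    assert (Hx1c : x1 < b) by (unfold x1; apply Rmax_lub_lt; lra).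
    set (w := fun y => y * p y - u y).
    assert (Hdw : forall y, x0 < y < b -> is_derive w y (y * q y)).
    { intros y Hy. destruct (Hs y Hy) as [A [B [C D]]]. apply dW; assumption. }
    assert (Hq : forall y, x0 < y < b -> q y = (1 + p y ^ 2) * (w y / 2 + k / u y)).
    { intros y Hy. destruct (Hs y Hy) as [A [B [C D]]]. unfold w.
      assert (0 < 1 + p y ^ 2) by nra.
      replace (q y) with ((q y / (1 + p y ^ 2)) * (1 + p y ^ 2)) by (field; lra).
      rewrite D. rewrite Rmult_comm. f_equal. unfold Rdiv. rewrite Rmult_minus_distr_r. reflexivity. }
    destruct (classic (exists x2, x1 <= x2 < b /\ 0 < w x2)) as [[x2 [Hx2 Hw2]]|Hn].
    + assert (Hwp : forall y, x2 <= y < b -> 0 < w y).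
      { apply (barrier w (fun y => y * q y) x0 b x2); try lra.
        - exact Hdw.
        - intros z Hz Hwz. rewrite Hq by lra. rewrite Hwz.
          destruct (Hs z ltac:(lra)) as [A _].
          assert (0 < k / u z) by (apply Rdiv_lt_0_compat; lra).
          assert (0 < 1 + p z ^ 2) by nra.
          assert (0 < z) by lra.
          apply Rmult_lt_0_compat; [lra|]. apply Rmult_lt_0_compat; lra. }
      assert (Hpp : forall y, x2 <= y < b -> 0 < p y).
      { intros y Hy. specialize (Hwp y Hy). destruct (Hs y ltac:(lra)) as [A _].
        unfold w in Hwp. assert (0 < y) by lra. nra. }
      set (x3 := (x2 + b) / 2).
      set (c := x1 / (2 * b)).
      assert (Hc : 0 < c) by (unfold c; apply Rdiv_lt_0_compat; lra).
      set (Phi := fun y => / w y + c * u y).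
      assert (HPhi : forall y, x3 <= y < b -> Phi y <= Phi x3).
      { intros y Hy.
        apply (decr_lemma Phi (fun y => - (y * q y) / w y ^ 2 + c * p y) x2 x3 b); try (unfold x3 in *; lra).
        - intros z Hz. destruct (Hs z ltac:(lra)) as [A [B _]].
          apply (dPhi w (fun y => y * q y) u p c z). apply Hdw; lra. exact B.
          specialize (Hwp z ltac:(lra)). lra.
        - intros z Hz. unfold x3 in Hz.
          destruct (Hs z ltac:(lra)) as [A _].
          specialize (Hwp z ltac:(lra)). specialize (Hpp z ltac:(lra)).
          rewrite (Hq z) by lra.
          set (W := w z) in *. set (Pz := p z) in *. set (U := u z) in *.
          assert (HW : W <= b * Pz) by (unfold W, w; fold Pz U; nra).
          assert (Hk2 : 0 < k / U) by (apply Rdiv_lt_0_compat; lra).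
          assert (Hz0 : x1 <= z) by lra.
          assert (Hz1 : 0 < z) by lra.
          assert (F1 : 0 < z * W) by (apply Rmult_lt_0_compat; lra).
          assert (F2 : 0 < z * ((1 + Pz ^ 2) * (k / U))) by (apply Rmult_lt_0_compat; [lra|]; apply Rmult_lt_0_compat; [nra|lra]).
          assert (E1 : z * ((1 + Pz ^ 2) * (W / 2 + k / U)) >= z * Pz ^ 2 * W / 2) by (clear - F1 F2; nra).
          assert (F3 : 0 <= (z - x1) * (Pz ^ 2 * W)) by (apply Rmult_le_pos; [lra|]; apply Rmult_le_pos; [apply pow2_ge_0|lra]).
          assert (E2 : z * Pz ^ 2 * W / 2 >= x1 * Pz ^ 2 * W / 2) by (clear - F3; nra).
          assert (E3 : x1 * Pz ^ 2 * W / 2 >= c * Pz * W ^ 2).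
          { unfold c. apply Rle_ge. 
            replace (x1 / (2 * b) * Pz * W ^ 2) with ((x1 * Pz * W / 2) * (W / b)) by (field; lra).
            replace (x1 * Pz ^ 2 * W / 2) with ((x1 * Pz * W / 2) * Pz) by field.
            apply Rmult_le_compat_l. assert (0 < x1 * Pz * W) by (apply Rmult_lt_0_compat; [apply Rmult_lt_0_compat|]; lra). lra.
            apply (Rmult_le_reg_r b); [lra|]. replace (W / b * b) with W by (field; lra). lra. }
          assert (HW2 : 0 < W ^ 2) by nra.
          assert (- (z * ((1 + Pz ^ 2) * (W / 2 + k / U))) / W ^ 2 <= - (c * Pz)).
          { unfold Rdiv. rewrite Ropp_mult_distr_l.
            apply (Rmult_le_reg_r (W ^ 2)); [exact HW2|].
            rewrite Rmult_assoc, Rinv_l by lra. lra. }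
          lra. }
      assert (Hub : forall y, x3 <= y < b -> u y <= Phi x3 / c).
      { intros y Hy. specialize (HPhi y Hy). specialize (Hwp y ltac:(unfold x3 in *; lra)).
        unfold Phi in HPhi at 1.
        assert (0 < / w y) by (apply Rinv_0_lt_compat; lra).
        apply (Rmult_le_reg_l c); [lra|]. replace (c * (Phi x3 / c)) with (Phi x3) by (field; lra).
        lra. }
      destruct (mono_lim (fun y => - u y) 0 (- (Phi x3 / c)) x3 b) as [L HL]; [unfold x3; lra| | |].
      * intros y y' Hy Hyy Hy'.
        assert (- u y' <= - u y).
        { apply (decr_lemma (fun y => - u y) (fun y => - p y) x2 x3 b); try (unfold x3 in *; lra).
          - intros z Hz. destruct (Hs z ltac:(lra)) as [A [B _]]. apply dN. exact B.
          - intros z Hz. specialize (Hpp z ltac:(unfold x3 in *; lra)). lra. }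
        lra.
      * intros y Hy. specialize (Hub y Hy). lra.
      * exists (- L).
        assert (HO : filterlim (fun y => - (- u y)) (at_left b) (locally (- L))).
        { eapply filterlim_comp; [exact HL|]. exact (@filterlim_opp R_AbsRing R_NormedModule L). }
        eapply filterlim_ext; [|exact HO]. intros y. simpl. apply Ropp_involutive.
    + assert (Hwn : forall y, x1 <= y < b -> w y <= 0).
      { intros y Hy. apply Rnot_lt_le. intro h. apply Hn. exists y. split; assumption. }
      set (al := Rmax x0 (x1 / 2)).
      assert (Hal1 : x0 <= al) by apply Rmax_l.
      assert (Hal2 : x1 / 2 <= al) by apply Rmax_r.
      assert (Hal3 : al < x1) by (unfold al; apply Rmax_lub_lt; lra).
      set (P := u x1 * / x1).
      assert (HR : forall y, x1 <= y < b -> u y * / y <= P).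
      { intros y Hy. apply (decr_lemma (fun y => u y * / y) (fun y => (y * p y - u y) / y ^ 2) al x1 b); try lra.
        - intros z Hz. destruct (Hs z ltac:(lra)) as [A [B _]]. apply dR. exact B. lra.
        - intros z Hz. specialize (Hwn z Hz). unfold w in Hwn.
          unfold Rdiv. apply Rmult_le_0_r; [lra|]. left. apply Rinv_0_lt_compat. assert (0 < z) by lra. nra. }
      assert (HP0 : 0 < P).
      { unfold P. destruct (Hs x1 ltac:(lra)) as [A _]. apply Rmult_lt_0_compat; [lra|]. apply Rinv_0_lt_compat; lra. }
      assert (Hp : forall y, x1 <= y < b -> p y <= P).
      { intros y Hy. specialize (HR y Hy). specialize (Hwn y Hy). unfold w in Hwn.
        assert (0 < y) by lra.
        assert (p y <= u y * / y).
        { apply (Rmult_le_reg_l y); [lra|]. replace (y * (u y * / y)) with (u y) by (field; lra). lra. }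
        lra. }
      apply (mono_lim u P (- P * b) x1 b); [lra| |].
      * intros y y' Hy Hyy Hy'. apply (decr_lemma (fun y => u y - P * y) (fun y => p y - P) x0 x1 b); try lra.
        -- intros z Hz. destruct (Hs z Hz) as [A [B _]]. apply dG. exact B.
        -- intros z Hz. specialize (Hp z Hz). lra.
      * intros y Hy. destruct (Hs y ltac:(lra)) as [A _]. nra.
Qed.

Lemma dOpp (f : R -> R) (df : R) y : is_derive f (- y) df -> is_derive (fun x => f (- x)) y (- df).
Proof.
  intro H.
  assert (H2 := is_derive_comp f (fun x => - x) y df (opp one) H (is_derive_opp (fun x => x) y one (is_derive_id y))).
  rewrite scal_opp_one in H2. exact H2.
Qed.

Theorem lemma2p8 (n : nat) (Hn : (2 <= n)%nat) (a b : Rbar) (u : R -> R) :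
  maximal_solution n a b u ->
  (forall b0 : R, b = Finite b0 ->
     exists L : R, filterlim u (at_left b0) (locally L)) /\
  (forall a0 : R, a = Finite a0 ->
     exists L : R, filterlim u (at_right a0) (locally L)).
Proof.
  intros [[Hab Hall] _].
  assert (Hk : 0 < INR n - 1).
  { apply le_INR in Hn. simpl in Hn. lra. }
  split.
  - intros b0 ->.
    assert (Hx0 : exists x0, x0 < b0 /\ forall x, x0 < x < b0 -> in_ival a b0 x).
    { destruct a as [a0| |]; simpl in Hab.
      - exists a0. split; [exact Hab|]. intros x Hx. split; simpl; lra.
      - contradiction.
      - exists (b0 - 1). split; [lra|]. intros x Hx. split; simpl; [exact I|lra]. }
    destruct Hx0 as [x0 [Hx0 Hin]].
    apply (core (INR n - 1) x0 b0 u (Derive u) (Derive (Derive u)) Hk Hx0).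
    intros x Hx. destruct (Hall x (Hin x Hx)) as [A [B [C [_ E]]]].
    split; [exact A|]. split; [apply Derive_correct; exact B|].
    split; [apply Derive_correct; exact C|]. exact E.
  - intros a0 ->.
    assert (Hy0 : exists y0, a0 < y0 /\ forall x, a0 < x < y0 -> in_ival a0 b x).
    { destruct b as [b0| |]; simpl in Hab.
      - exists b0. split; [exact Hab|]. intros x Hx. split; simpl; lra.
      - exists (a0 + 1). split; [lra|]. intros x Hx. split; simpl; [lra|exact I].
      - contradiction. }
    destruct Hy0 as [y0 [Hy0 Hin]].
    destruct (core (INR n - 1) (- y0) (- a0) (fun x => u (- x)) (fun x => - Derive u (- x))
               (fun x => Derive (Derive u) (- x)) Hk ltac:(lra)) as [L HL].
    + intros x Hx. destruct (Hall (- x) (Hin (- x) ltac:(lra))) as [A [B [C [_ E]]]].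
      split; [exact A|].
      split.
      { apply (dOpp u). apply Derive_correct; exact B. }
      split.
      { eapply is_derive_eq. apply (is_derive_opp (fun y => Derive u (- y))).
        apply (dOpp (Derive u)). apply Derive_correct; exact C.
        unfold opp; simpl. apply Ropp_involutive. }
      assert (Hsq : (- Derive u (- x)) ^ 2 = Derive u (- x) ^ 2) by ring.
      rewrite Hsq, E. set (D1 := Derive u (- x)) in *. set (U := u (- x)) in *. field. lra.
    + exists L.
      assert (HC : filterlim (fun x => u (- (- x))) (at_right a0) (locally L)).
      { apply (filterlim_comp _ _ _ Ropp (fun x => u (- x)) (at_right a0) (at_left (- a0))); [apply filterlim_Ropp_right| exact HL]. }
      eapply filterlim_ext; [|exact HC]. intros x. cbv beta. rewrite Ropp_involutive. reflexivity.
Qed.
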